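(* Let $\chi=(X,\{e_i\},\{\gamma_i\},\{\varepsilon_i\})$ be a $\mathfrak g$-geometric crystal, let $f$ be an upper (resp. lower) half-decoration on $\chi$, and let $\theta:T'\to X$ be a positive structure for $(\chi,f)$. Let $(X_*(T')\cong\mathbb Z^{\dim T'},\{\tilde e_i\},\{{\rm wt}_i\},\{\tilde\varepsilon_i\})$ be the tropicalized (Langlands dual, ${}^L\mathfrak g$-) crystal, $\tilde f$ the tropicalization of $f\circ\theta$, and $\widetilde B_{\theta,f}:=\{\tilde x\in X_*(T')\mid \tilde f(\tilde x)\ge 0\}$, where $\tilde e_i^{\,n}(\tilde x)$ is declared to be $0$ whenever it does not lie in $\widetilde B_{\theta,f}$ (and $\tilde f_i=\tilde e_i^{-1}$). Then $\widetilde B_{\theta,f}$ with the restricted structure is an upper (resp. lower) normal crystal, i.e. for every $b\in\widetilde B_{\theta,f}$ and $i\in I$, $\tilde\varepsilon_i(b)=\max\{n\ge0\mid \tilde e_i^{\,n}b\in\widetilde B_{\theta,f}\}$ (resp. $\tilde\varphi_i(b)=\max\{n\ge0\mid \tilde f_i^{\,n}b\in\widetilde B_{\theta,f}\}$, where $\tilde\varphi_i=\tilde\varepsilon_i+{\rm wt}_i$).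
   Context: Setting: $\mathfrak g$ simple with Cartan matrix $A=(a_{ij})$, $a_{ij}=\alpha_j(h_i)$. A $\mathfrak g$-geometric crystal is $(X,\{e_i\}_{i\in I},\{\gamma_i\}_{i\in I},\{\varepsilon_i\}_{i\in I})$ where $X$ is an irreducible complex algebraic variety, $\gamma_i,\varepsilon_i$ are rational functions on $X$, and $e_i:\mathbb C^\times\times X\to X$, $(c,x)\mapsto e_i^c(x)$, are unital rational $\mathbb C^\times$-actions, such that $(\{1\}\times X)\cap{\rm dom}(e_i)$ is open dense in $\{1\}\times X$; $\gamma_j(e_i^c(x))=c^{a_{ij}}\gamma_j(x)$; the $e_i$ satisfy the Verma relations ($e_i^{c_1}e_j^{c_2}=e_j^{c_2}e_i^{c_1}$ if $a_{ij}=a_{ji}=0$; $e_i^{c_1}e_j^{c_1c_2}e_i^{c_2}=e_j^{c_2}e_i^{c_1c_2}e_j^{c_1}$ if $a_{ij}=a_{ji}=-1$; $e_i^{c_1}e_j^{c_1^2c_2}e_i^{c_1c_2}e_j^{c_2}=e_j^{c_2}e_i^{c_1c_2}e_j^{c_1^2c_2}e_i^{c_1}$ if $a_{ij}=-2,a_{ji}=-1$; $e_i^{c_1}e_j^{c_1^3c_2}e_i^{c_1^2c_2}e_j^{c_1^3c_2^2}e_i^{c_1c_2}e_j^{c_2}=e_j^{c_2}e_i^{c_1c_2}e_j^{c_1^3c_2^2}e_i^{c_1^2c_2}e_j^{c_1^3c_2}e_i^{c_1}$ if $a_{ij}=-3,a_{ji}=-1$); and $\varepsilon_i(e_i^c(x))=c^{-1}\varepsilon_i(x)$,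 $\varepsilon_i(e_j^c(x))=\varepsilon_i(x)$ if $a_{ij}=a_{ji}=0$. Put $\varphi_i:=\varepsilon_i\gamma_i$. A rational function $f$ on $X$ is an upper half-decoration if $f(e_i^c(x))=f(x)+(c^{-1}-1)\varepsilon_i(x)$, and a lower half-decoration if $f(e_i^c(x))=f(x)+(c-1)\varphi_i(x)$, for all $i,c,x$. A positive structure is a birational map $\theta:T'\to X$ from an algebraic torus $T'\cong(\mathbb C^\times)^m$ such that $\theta^{-1}\circ e_i\circ\theta:\mathbb C^\times\times T'\to T'$ and $\gamma_i\circ\theta,\varepsilon_i\circ\theta,f\circ\theta$ are positive rational maps (in the torus coordinates, ratios of polynomials with positive coefficients). Tropicalization of a positive rational function in coordinates $c_1,\dots,c_m$ (and $c$) is the piecewise-linear function on $\mathbb Z^m$ (and $\mathbb Z$) obtained by the valuation $\mathbb V(g)=-\deg g(x^{-1})$, i.e. replacing multiplication by $+$, division by $-$, addition by $\min$, positive constants by $0$, and $c_j$ by $x_j$. Thus $\tilde e_i^{\,n}$ ($n\in\mathbb Z$) is the tropicalization of $\theta^{-1}\circ e_i^c\circ\theta$, ${\rm wt}_i$ that of $\gamma_i\circ\theta$, $\tilde\varepsilon_i$ that of $\varepsilon_i\circ\theta$; $\tilde e_i=\tilde e_i^{\,1}$, $\tilde f_i=\tilde e_i^{\,-1}$. *)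

(* Defs.v *)
From Stdlib Require Import Reals ZArith Lia Lra.
Open Scope R_scope.

(** Index set I = {0,..,r-1}; A i j = a_ij = alpha_j(h_i). *)
Fixpoint sumR (n : nat) (f : nat -> R) : R :=
  match n with O => 0 | S k => sumR k f + f k end.

Definition simple_cartan (r : nat) (A : nat -> nat -> Z) : Prop :=
  (1 <= r)%nat /\
  (forall i, (i < r)%nat -> A i i = 2%Z) /\
  (forall i j, (i < r)%nat -> (j < r)%nat -> i <> j -> (A i j <= 0)%Z) /\
  (forall i j, (i < r)%nat -> (j < r)%nat -> (A i j = 0%Z <-> A j i = 0%Z)) /\
  (exists d : nat -> Z,
      (forall i, (i < r)%nat -> (0 < d i)%Z) /\
      (forall i j, (i < r)%nat -> (j < r)%nat -> (d i * A i j = d j * A j i)%Z) /\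
      (forall v : nat -> R, (exists i, (i < r)%nat /\ v i <> 0) ->
         0 < sumR r (fun i => sumR r (fun j => v i * IZR (d i * A i j) * v j)))) /\
  (forall S : nat -> bool,
      (exists i, (i < r)%nat /\ S i = true) ->
      (exists i, (i < r)%nat /\ S i = false) ->
      exists i j, (i < r)%nat /\ (j < r)%nat /\ S i = true /\ S j = false /\
                  A i j <> 0%Z).

(** * Subtraction-free (positive) rational expressions in the torus
    coordinates c_0..c_{m-1} (PVar j) and the extra parameter c (PC). *)
Inductive pexpr : Type :=
| PVar : nat -> pexpr
| PC : pexpr
| PConst : R -> pexpr
| PAdd : pexpr -> pexpr -> pexpr
| PMul : pexpr -> pexpr -> pexpr
| PDiv : pexpr -> pexpr -> pexpr.

Fixpoint wf (m : nat) (usec : bool) (e : pexpr) : Prop :=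
  match e with
  | PVar j => (j < m)%nat
  | PC => usec = true
  | PConst a => 0 < a
  | PAdd a b | PMul a b | PDiv a b => wf m usec a /\ wf m usec b
  end.

Fixpoint peval (e : pexpr) (x : nat -> R) (c : R) : R :=
  match e with
  | PVar j => x j
  | PC => c
  | PConst a => a
  | PAdd a b => peval a x c + peval b x c
  | PMul a b => peval a x c * peval b x c
  | PDiv a b => peval a x c / peval b x c
  end.

Fixpoint trop (e : pexpr) (b : nat -> Z) (n : Z) : Z :=
  match e with
  | PVar j => b j
  | PC => n
  | PConst _ => 0%Z
  | PAdd a1 a2 => Z.min (trop a1 b n) (trop a2 b n)
  | PMul a1 a2 => (trop a1 b n + trop a2 b n)%Z
  | PDiv a1 a2 => (trop a1 b n - trop a2 b n)%Z
  end.

Definition pos_pt (x : nat -> R) : Prop := forall j, 0 < x j.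
Definition pt_eq (m : nat) (x y : nat -> R) : Prop := forall j, (j < m)%nat -> x j = y j.

Definition act (E : nat -> nat -> pexpr) (i : nat) (c : R) (x : nat -> R) : nat -> R :=
  fun j => peval (E i j) x c.

(** A g-geometric crystal on the torus T' = (C^x)^m (i.e. transported via
    a positive structure theta), given by positive rational expressions:
    E i j = j-th coordinate of theta^-1 o e_i^c o theta, G i = gamma_i o theta,
    Eps i = eps_i o theta.  Identities of rational functions are checked on
    the positive real points, which is equivalent for subtraction-free
    expressions (Zariski density). *)
Definition pos_geom_crystal (r : nat) (A : nat -> nat -> Z) (m : nat)
  (E : nat -> nat -> pexpr) (G Eps : nat -> pexpr) : Prop :=
  (forall i j, (i < r)%nat -> (j < m)%nat -> wf m true (E i j)) /\
  (forall i, (i < r)%nat -> wf m false (G i) /\ wf m false (Eps i)) /\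
  (forall i x, (i < r)%nat -> pos_pt x -> pt_eq m (act E i 1 x) x) /\
  (forall i c1 c2 x, (i < r)%nat -> 0 < c1 -> 0 < c2 -> pos_pt x ->
     pt_eq m (act E i c1 (act E i c2 x)) (act E i (c1 * c2) x)) /\
  (forall i j c x, (i < r)%nat -> (j < r)%nat -> 0 < c -> pos_pt x ->
     peval (G j) (act E i c x) 1 = powerRZ c (A i j) * peval (G j) x 1) /\
  (forall i j c1 c2 x, (i < r)%nat -> (j < r)%nat -> 0 < c1 -> 0 < c2 -> pos_pt x ->
     A i j = 0%Z -> A j i = 0%Z ->
     pt_eq m (act E i c1 (act E j c2 x)) (act E j c2 (act E i c1 x))) /\
  (forall i j c1 c2 x, (i < r)%nat -> (j < r)%nat -> 0 < c1 -> 0 < c2 -> pos_pt x ->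
     A i j = (-1)%Z -> A j i = (-1)%Z ->
     pt_eq m (act E i c1 (act E j (c1 * c2) (act E i c2 x)))
             (act E j c2 (act E i (c1 * c2) (act E j c1 x)))) /\
  (forall i j c1 c2 x, (i < r)%nat -> (j < r)%nat -> 0 < c1 -> 0 < c2 -> pos_pt x ->
     A i j = (-2)%Z -> A j i = (-1)%Z ->
     pt_eq m (act E i c1 (act E j (c1 ^ 2 * c2) (act E i (c1 * c2) (act E j c2 x))))
             (act E j c2 (act E i (c1 * c2) (act E j (c1 ^ 2 * c2) (act E i c1 x))))) /\
  (forall i j c1 c2 x, (i < r)%nat -> (j < r)%nat -> 0 < c1 -> 0 < c2 -> pos_pt x ->
     A i j = (-3)%Z -> A j i = (-1)%Z ->
     pt_eq m (act E i c1 (act E j (c1 ^ 3 * c2) (act E i (c1 ^ 2 * c2)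
               (act E j (c1 ^ 3 * c2 ^ 2) (act E i (c1 * c2) (act E j c2 x))))))
             (act E j c2 (act E i (c1 * c2) (act E j (c1 ^ 3 * c2 ^ 2)
               (act E i (c1 ^ 2 * c2) (act E j (c1 ^ 3 * c2) (act E i c1 x))))))) /\
  (forall i c x, (i < r)%nat -> 0 < c -> pos_pt x ->
     peval (Eps i) (act E i c x) 1 = / c * peval (Eps i) x 1) /\
  (forall i j c x, (i < r)%nat -> (j < r)%nat -> 0 < c -> pos_pt x ->
     A i j = 0%Z -> A j i = 0%Z ->
     peval (Eps i) (act E j c x) 1 = peval (Eps i) x 1).

(** upper / lower half-decorations (f o theta given by the positive
    expression F) *)
Definition upper_half_decoration (r m : nat) (E : nat -> nat -> pexpr)
  (Eps : nat -> pexpr) (F : pexpr) : Prop :=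
  forall i c x, (i < r)%nat -> 0 < c -> pos_pt x ->
    peval F (act E i c x) 1 = peval F x 1 + (/ c - 1) * peval (Eps i) x 1.

Definition lower_half_decoration (r m : nat) (E : nat -> nat -> pexpr)
  (G Eps : nat -> pexpr) (F : pexpr) : Prop :=
  forall i c x, (i < r)%nat -> 0 < c -> pos_pt x ->
    peval F (act E i c x) 1
    = peval F x 1 + (c - 1) * (peval (Eps i) x 1 * peval (G i) x 1).

(** tropicalized crystal on X_*(T') = Z^m (coordinates j < m of b) *)
Definition tact (E : nat -> nat -> pexpr) (i : nat) (n : Z) (b : nat -> Z) : nat -> Z :=
  fun j => trop (E i j) b n.

Definition inB (F : pexpr) (b : nat -> Z) : Prop := (0 <= trop F b 0)%Z.

Definition is_maxZ (P : Z -> Prop) (k : Z) : Prop :=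
  P k /\ forall n, P n -> (n <= k)%Z.

(* Main.v *)
Require Import Defs.
From Stdlib Require Import Reals ZArith Lia Lra.
Open Scope R_scope.

Fixpoint subst (e : pexpr) (s : nat -> pexpr) : pexpr :=
  match e with
  | PVar j => s j
  | PC => PConst 1
  | PConst a => PConst a
  | PAdd a b => PAdd (subst a s) (subst b s)
  | PMul a b => PMul (subst a s) (subst b s)
  | PDiv a b => PDiv (subst a s) (subst b s)
  end.

Lemma peval_subst e s x c :
  peval (subst e s) x c = peval e (fun j => peval (s j) x c) 1.
Proof. induction e; simpl; try rewrite IHe1, IHe2; reflexivity. Qed.

Lemma trop_subst e s b n :
  trop (subst e s) b n = trop e (fun j => trop (s j) b n) 0%Z.
Proof. induction e; simpl; try rewrite IHe1, IHe2; reflexivity. Qed.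

Lemma wf_subst m u m' u' e s : wf m u e ->
  (forall j, (j < m)%nat -> wf m' u' (s j)) -> wf m' u' (subst e s).
Proof.
  induction e; simpl; intros H Hs; try tauto; try lra; auto.
Qed.

Lemma wf_false m u e : wf m false e -> wf m u e.
Proof. induction e; simpl; intuition congruence. Qed.

Lemma trop_noc m e b n n' : wf m false e -> trop e b n = trop e b n'.
Proof. induction e; simpl; intuition (try congruence; try f_equal; auto). Qed.

Lemma peval_noc m e x c c' : wf m false e -> peval e x c = peval e x c'.
Proof. induction e; simpl; intuition (try congruence; try f_equal; auto). Qed.

Lemma pow_le1 t (k : nat) : 0 < t <= 1 -> t ^ k <= 1.
Proof.
  intros Ht; induction k; simpl; [lra|].
  assert (0 <= t ^ k) by (apply pow_le; lra). nra.
Qed.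

Lemma pRZ_le1 t p : 0 < t <= 1 -> (0 <= p)%Z -> powerRZ t p <= 1.
Proof.
  intros Ht Hp. replace p with (Z.of_nat (Z.to_nat p)) by lia.
  rewrite <- pow_powerRZ. now apply pow_le1.
Qed.

Lemma pRZ_mono t k k' : 0 < t <= 1 -> (k <= k')%Z -> powerRZ t k' <= powerRZ t k.
Proof.
  intros Ht Hk. replace k' with (k + (k' - k))%Z by lia.
  rewrite powerRZ_add by lra.
  assert (0 < powerRZ t k) by (apply powerRZ_lt; lra).
  assert (powerRZ t (k' - k) <= 1) by (apply pRZ_le1; lia || lra).
  nra.
Qed.

Lemma pRZ_le_t t p : 0 < t <= 1 -> (1 <= p)%Z -> powerRZ t p <= t.
Proof.
  intros Ht Hp. replace p with (1 + (p - 1))%Z by lia.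
  rewrite powerRZ_add by lra. rewrite powerRZ_1.
  assert (powerRZ t (p - 1) <= 1) by (apply pRZ_le1; lia || lra). nra.
Qed.

Definition ptb (t : R) (b : nat -> Z) : nat -> R := fun j => powerRZ t (b j).

Lemma bounds m u e b n : wf m u e ->
  exists L U, 0 < L /\ 0 < U /\ forall t, 0 < t <= 1 ->
    L * powerRZ t (trop e b n) <= peval e (ptb t b) (powerRZ t n)
    <= U * powerRZ t (trop e b n).
Proof.
  induction e; simpl; intros Hwf.
  - exists 1, 1; refine (conj _ (conj _ _)); try lra; intros; unfold ptb; lra.
  - exists 1, 1; refine (conj _ (conj _ _)); try lra; intros; lra.
  - exists r, r; refine (conj _ (conj _ _)); try lra; intros; simpl; lra.
  - destruct Hwf as [H1 H2].
    destruct (IHe1 H1) as (L1 & U1 & HL1 & HU1 & B1).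
    destruct (IHe2 H2) as (L2 & U2 & HL2 & HU2 & B2).
    exists (Rmin L1 L2), (U1 + U2); refine (conj _ (conj _ _)).
    + now apply Rmin_glb_lt.
    + lra.
    + intros t Ht. specialize (B1 t Ht). specialize (B2 t Ht).
      set (k1 := trop e1 b n) in *. set (k2 := trop e2 b n) in *.
      assert (0 < powerRZ t k1) by (apply powerRZ_lt; lra).
      assert (0 < powerRZ t k2) by (apply powerRZ_lt; lra).
      assert (Rmin L1 L2 <= L1) by apply Rmin_l.
      assert (Rmin L1 L2 <= L2) by apply Rmin_r.
      destruct (Z.le_ge_cases k1 k2).
      * rewrite Z.min_l by lia.
        assert (powerRZ t k2 <= powerRZ t k1) by (apply pRZ_mono; auto). split; nra.
      * rewrite Z.min_r by lia.
        assert (powerRZ t k1 <= powerRZ t k2) by (apply pRZ_mono; auto; lia). split; nra.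
  - destruct Hwf as [H1 H2].
    destruct (IHe1 H1) as (L1 & U1 & HL1 & HU1 & B1).
    destruct (IHe2 H2) as (L2 & U2 & HL2 & HU2 & B2).
    exists (L1 * L2), (U1 * U2); refine (conj _ (conj _ _)); try nra;
    intros t Ht; split; specialize (B1 t Ht); specialize (B2 t Ht);
    rewrite powerRZ_add by lra;
    set (k1 := trop e1 b n) in *; set (k2 := trop e2 b n) in *;
    assert (0 < powerRZ t k1) by (apply powerRZ_lt; lra);
    assert (0 < powerRZ t k2) by (apply powerRZ_lt; lra).
    + assert (0 < L1 * powerRZ t k1) by nra.
      assert (0 < L2 * powerRZ t k2) by nra.
      apply Rle_trans with ((L1 * powerRZ t k1) * (L2 * powerRZ t k2)); [lra|].
      apply Rmult_le_compat; lra.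
    + apply Rle_trans with ((U1 * powerRZ t k1) * (U2 * powerRZ t k2)); [|lra].
      assert (0 < L1 * powerRZ t k1) by nra.
      assert (0 < L2 * powerRZ t k2) by nra.
      apply Rmult_le_compat; lra.
  - destruct Hwf as [H1 H2].
    destruct (IHe1 H1) as (L1 & U1 & HL1 & HU1 & B1).
    destruct (IHe2 H2) as (L2 & U2 & HL2 & HU2 & B2).
    exists (L1 / U2), (U1 / L2); refine (conj _ (conj _ _));
      try (unfold Rdiv; apply Rmult_lt_0_compat; auto; apply Rinv_0_lt_compat; auto);
    intros t Ht; split; specialize (B1 t Ht); specialize (B2 t Ht);
    unfold Z.sub; rewrite powerRZ_add, powerRZ_neg' by lra;
    set (k1 := trop e1 b n) in *; set (k2 := trop e2 b n) in *;
    set (p1 := peval e1 (ptb t b) (powerRZ t n)) in *;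
    set (p2 := peval e2 (ptb t b) (powerRZ t n)) in *;
    assert (0 < powerRZ t k1) by (apply powerRZ_lt; lra);
    assert (0 < powerRZ t k2) by (apply powerRZ_lt; lra);
    assert (0 < L1 * powerRZ t k1) by nra;
    assert (0 < L2 * powerRZ t k2) by nra.
    + replace (L1 / U2 * (powerRZ t k1 * / powerRZ t k2))
        with ((L1 * powerRZ t k1) / (U2 * powerRZ t k2)) by (field; lra).
      unfold Rdiv. apply Rmult_le_compat; try lra.
      * left; apply Rinv_0_lt_compat; nra.
      * apply Rinv_le_contravar; lra.
    + replace (U1 / L2 * (powerRZ t k1 * / powerRZ t k2))
        with ((U1 * powerRZ t k1) / (L2 * powerRZ t k2)) by (field; lra).
      unfold Rdiv. apply Rmult_le_compat; try lra.
      * left; apply Rinv_0_lt_compat; nra.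
      * apply Rinv_le_contravar; lra.
Qed.

Lemma exps_eq k1 k2 L1 U1 L2 U2 (g : R -> R) :
  0 < L1 -> 0 < U1 -> 0 < L2 -> 0 < U2 ->
  (forall t, 0 < t <= 1 -> L1 * powerRZ t k1 <= g t <= U1 * powerRZ t k1) ->
  (forall t, 0 < t <= 1 -> L2 * powerRZ t k2 <= g t <= U2 * powerRZ t k2) ->
  (k1 <= k2)%Z.
Proof.
  intros HL1 HU1 HL2 HU2 B1 B2.
  destruct (Z.le_gt_cases k1 k2) as [|Hlt]; auto. exfalso.
  set (t := Rmin 1 (L2 / (2 * U1))).
  assert (Ht : 0 < t <= 1).
  { split. apply Rmin_glb_lt. lra. unfold Rdiv; apply Rmult_lt_0_compat; auto.
    apply Rinv_0_lt_compat; lra. apply Rmin_l. }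
  assert (Ht2 : t <= L2 / (2 * U1)) by apply Rmin_r.
  specialize (B1 t Ht). specialize (B2 t Ht).
  assert (0 < powerRZ t k2) by (apply powerRZ_lt; lra).
  replace k1 with (k2 + (k1 - k2))%Z in B1 by lia.
  rewrite powerRZ_add in B1 by lra.
  assert (powerRZ t (k1 - k2) <= t) by (apply pRZ_le_t; auto; lia).
  assert (0 < powerRZ t (k1 - k2)) by (apply powerRZ_lt; lra).
  assert (L2 <= U1 * powerRZ t (k1 - k2)) by nra.
  assert (U1 * t <= L2 / 2).
  { apply Rmult_le_compat_l with (r := U1) in Ht2; try lra.
    replace (U1 * (L2 / (2 * U1))) with (L2 / 2) in Ht2 by (field; lra). lra. }
  nra.
Qed.

Lemma trop_eq m e1 e2 : wf m true e1 -> wf m true e2 ->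
  (forall x c, pos_pt x -> 0 < c -> peval e1 x c = peval e2 x c) ->
  forall b n, trop e1 b n = trop e2 b n.
Proof.
  intros W1 W2 Heq b n.
  destruct (bounds m true e1 b n W1) as (L1 & U1 & HL1 & HU1 & B1).
  destruct (bounds m true e2 b n W2) as (L2 & U2 & HL2 & HU2 & B2).
  assert (B2' : forall t, 0 < t <= 1 ->
    L2 * powerRZ t (trop e2 b n) <= peval e1 (ptb t b) (powerRZ t n)
    <= U2 * powerRZ t (trop e2 b n)).
  { intros t Ht. rewrite Heq. now apply B2.
    intro j; unfold ptb; apply powerRZ_lt; lra. apply powerRZ_lt; lra. }
  apply Z.le_antisymm.
  - eapply (exps_eq _ _ L1 U1 L2 U2 (fun t => peval e1 (ptb t b) (powerRZ t n))); eauto.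
  - eapply (exps_eq _ _ L2 U2 L1 U1 (fun t => peval e1 (ptb t b) (powerRZ t n))); eauto.
Qed.

Lemma core (f0 eps : Z) (h : Z -> Z) : (0 <= f0)%Z ->
  (forall n, Z.min (h n) eps = Z.min f0 (eps - n))%Z ->
  is_maxZ (fun n => (0 <= n)%Z /\ (0 <= h n)%Z) eps.
Proof.
  intros H0 H.
  assert (Hle : (f0 <= eps)%Z) by (specialize (H (eps - f0)%Z); lia).
  split.
  - specialize (H eps); lia.
  - intros k [Hk1 Hk2]. specialize (H k). lia.
Qed.

Theorem proposition4p7 :
  forall (r : nat) (A : nat -> nat -> Z), simple_cartan r A ->
  forall (m : nat) (E : nat -> nat -> pexpr) (G Eps : nat -> pexpr),
    pos_geom_crystal r A m E G Eps ->
  forall F : pexpr, wf m false F ->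
    (upper_half_decoration r m E Eps F ->
       forall i (b : nat -> Z), (i < r)%nat -> inB F b ->
         is_maxZ (fun n => (0 <= n)%Z /\ inB F (tact E i n b)) (trop (Eps i) b 0))
    /\
    (lower_half_decoration r m E G Eps F ->
       forall i (b : nat -> Z), (i < r)%nat -> inB F b ->
         is_maxZ (fun n => (0 <= n)%Z /\ inB F (tact E i (- n) b))
                 (trop (Eps i) b 0 + trop (G i) b 0)%Z).
Proof.
  intros r A _ m E G Eps Hc F HF.
  destruct Hc as (HE & HGE & _).
  split.
  - intros Hup i b Hi HB. destruct (HGE i Hi) as [WG WE].
    apply (core (trop F b 0) _ (fun n => trop F (tact E i n b) 0)); auto.
    intro n.
    assert (T : forall b n, trop (PAdd (subst F (E i)) (Eps i)) b n =
                           trop (PAdd F (PDiv (Eps i) PC)) b n).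
    2:{ specialize (T b n). simpl in T. rewrite trop_subst in T.
      rewrite (trop_noc m F b n 0) in T by auto.
      rewrite (trop_noc m (Eps i) b n 0) in T by auto.
      unfold tact; rewrite T; reflexivity. }
    apply trop_eq with m.
    + split; [|now apply wf_false].
      apply wf_subst with (m := m) (u := false); auto.
    + repeat split; auto; apply wf_false; auto.
    + intros x c Hx Hc'. simpl. rewrite peval_subst.
      unfold upper_half_decoration in Hup. unfold act in Hup.
      rewrite (peval_noc m F x c 1) by auto.
      rewrite (peval_noc m (Eps i) x c 1) by auto.
      rewrite Hup by auto. field; lra.
  - intros Hlo i b Hi HB. destruct (HGE i Hi) as [WG WE].
    apply (core (trop F b 0) _ (fun n => trop F (tact E i (- n) b) 0)); auto.
    intro n.
    assert (T : forall b n, trop (PAdd (subst F (E i)) (PMul (Eps i) (G i))) b n =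
                           trop (PAdd F (PMul PC (PMul (Eps i) (G i)))) b n).
    2:{ specialize (T b (- n)%Z). simpl in T. rewrite trop_subst in T.
      rewrite (trop_noc m F b (- n) 0) in T by auto.
      rewrite (trop_noc m (Eps i) b (- n) 0) in T by auto.
      rewrite (trop_noc m (G i) b (- n) 0) in T by auto.
      unfold tact; lia. }
    apply trop_eq with m.
    + split; [|split; now apply wf_false].
      apply wf_subst with (m := m) (u := false); auto.
    + repeat split; auto; apply wf_false; auto.
    + intros x c Hx Hc'. simpl. rewrite peval_subst.
      unfold lower_half_decoration in Hlo. unfold act in Hlo.
      rewrite (peval_noc m F x c 1) by auto.
      rewrite (peval_noc m (Eps i) x c 1) by auto.
      rewrite (peval_noc m (G i) x c 1) by auto.
      rewrite Hlo by auto. ring.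
Qed.
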